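(* Let $B$ be a one-dimensional standard Brownian motion with $B(0)=0$, let $\ell\in\mathcal{D}^-[0,\infty)$, $r\in\mathcal{D}^+[0,\infty)$ with $\ell\le r$, let $x\in\mathbb{R}$, let $W=\overline{\Gamma}_{\ell,r}(x+B)$ and $Y=W-x-B$. Let $\tau=\inf\{t>0: r(t)=\ell(t)\text{ or } r(t-)=\ell(t-)\}$ and assume $\tau\in(0,\infty)$. Let $K'\subseteq\mathbb{Z}$ and let $K$ be $K'$ with its largest element removed (if $K'$ has a largest element; otherwise $K=K'$). Suppose there is a strictly increasing sequence $\{s_k\}_{k\in K'}$ with values in $[0,\tau]$ and a constant $c_1\in(-\infty,\infty)$ such that for all $k\in K$ $$\frac{\min\big(r(s_{k+1})-\ell(s_k),\,-\ell(s_{k+1})+r(s_k)\big)}{(s_{k+1}-s_k)^{1/2}}\le c_1.$$ If $\sum_{k\in K}(s_{k+1}-s_k)^{1/2}=\infty$, then $\mathcal{V}_{[0,\tau]}Y=\infty$ almost surely.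
   Context: $\mathcal{D}[0,\infty)$ denotes the càdlàg functions $[0,\infty)\to(-\infty,\infty)$; $\mathcal{D}^-[0,\infty)$ (resp. $\mathcal{D}^+[0,\infty)$) denotes càdlàg functions with values in $[-\infty,\infty)$ (resp. $(-\infty,\infty]$). $\mathcal{V}_{[t_1,t_2]}(f)$ is the total variation of $f$ on $[t_1,t_2]$. ESP: $(\phi,\eta)\in\mathcal{D}[0,\infty)^2$ solves the extended Skorokhod problem on $[\ell(\cdot),r(\cdot)]$ for $\psi\in\mathcal{D}[0,\infty)$ if (1) $\phi(t)=\psi(t)+\eta(t)\in[\ell(t),r(t)]$ for all $t\ge0$; (2) for all $0\le s\le t$: $\eta(t)-\eta(s)\ge0$ if $\phi(u)<r(u)$ for all $u\in(s,t]$, and $\eta(t)-\eta(s)\le0$ if $\phi(u)>\ell(u)$ for all $u\in(s,t]$; (3) for all $t\ge0$: $\eta(t)-\eta(t-)\ge0$ if $\phi(t)<r(t)$, and $\eta(t)-\eta(t-)\le0$ if $\phi(t)>\ell(t)$, where $\eta(0-)=0$. For $\ell\le r$ this problem has a unique solution for every $\psi$; $\overline{\Gamma}_{\ell,r}(\psi)$ denotes its first component (applied pathwise). $W$ is the reflected Brownian motion on $[\ell(\cdot),r(\cdot)]$ and $Y$ its local time on the boundary. *)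

(* Defs.v *)
From HB Require Import structures.
From mathcomp Require Import all_boot all_order all_algebra.
From mathcomp Require Import all_classical all_reals all_analysis.
Set Implicit Arguments. Unset Strict Implicit. Unset Printing Implicit Defensive.
Import Order.TTheory GRing.Theory Num.Theory.
Import numFieldNormedType.Exports.
Local Open Scope classical_set_scope.
Local Open Scope ring_scope.

Section Defs.
Variable R : realType.

Definition cadlag (f : R -> R) : Prop :=
  (forall t, 0 <= t -> f x @[x --> t^'+] --> f t) /\
  (forall t, 0 < t -> cvg (f x @[x --> t^'-])).

Definition leftlim (f : R -> R) (t : R) : R := lim (f x @[x --> t^'-]).
Definition eleftlim (f : R -> \bar R) (t : R) : \bar R := lim (f x @[x --> t^'-]).

Definition cadlag_minus (f : R -> \bar R) : Prop :=
  (forall t, 0 <= t -> f t != +oo%E) /\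
  (forall t, 0 <= t -> f x @[x --> t^'+] --> f t) /\
  (forall t, 0 < t -> cvg (f x @[x --> t^'-]) /\ eleftlim f t != +oo%E).

Definition cadlag_plus (f : R -> \bar R) : Prop :=
  (forall t, 0 <= t -> f t != -oo%E) /\
  (forall t, 0 <= t -> f x @[x --> t^'+] --> f t) /\
  (forall t, 0 < t -> cvg (f x @[x --> t^'-]) /\ eleftlim f t != -oo%E).

Definition eta_minus (eta : R -> R) (t : R) : R :=
  if t == 0 then 0 else leftlim eta t.

(* (phi, eta) solves the extended Skorokhod problem on [l, r] for psi *)
Definition ESP (l r : R -> \bar R) (psi phi eta : R -> R) : Prop :=
  [/\ cadlag phi, cadlag eta,
      (forall t, 0 <= t ->
         phi t = psi t + eta t /\ (l t <= (phi t)%:E <= r t)%E),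
      (forall s t, 0 <= s -> s <= t ->
         ((forall u, s < u -> u <= t -> ((phi u)%:E < r u)%E) -> eta t - eta s >= 0) /\
         ((forall u, s < u -> u <= t -> (l u < (phi u)%:E)%E) -> eta t - eta s <= 0))
    & (forall t, 0 <= t ->
         (((phi t)%:E < r t)%E -> eta t - eta_minus eta t >= 0) /\
         ((l t < (phi t)%:E)%E -> eta t - eta_minus eta t <= 0))].

(* one-dimensional standard Brownian motion started at 0 on (T, P):
   measurable coordinates, B(0) = 0, continuous paths on [0,oo), and for
   0 = t_0 < t_1 < ... < t_n the increments B(t_{i+1}) - B(t_i) are
   independent with law N(0, t_{i+1} - t_i) (normal_prob takes the
   standard deviation). *)
Definition standard_BM (d : measure_display) (T : measurableType d)
    (P : probability T R) (B : T -> R -> R) : Prop :=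
  [/\ (forall t, measurable_fun setT (fun w => B w t)),
      (forall w, B w 0 = 0),
      (forall w, {within `[0, +oo[, continuous (B w)})
    & (forall (n : nat) (t : nat -> R) (A : nat -> set R),
         t 0%N = 0 -> (forall i, (i < n)%N -> t i < t i.+1) ->
         (forall i, measurable (A i)) ->
         P (\bigcap_(i in `I_n) [set w | A i (B w (t i.+1) - B w (t i))]) =
         (\prod_(i < n) normal_prob 0 (Num.sqrt (t i.+1 - t i)) (A i))%E)].

Definition collision_times (l r : R -> \bar R) : set R :=
  [set t | 0 < t /\ (r t = l t \/ eleftlim r t = eleftlim l t)].

Definition drop_max (K' : set int) : set int :=
  [set k | K' k /\ ~ (forall j, K' j -> (j <= k)%R)].

End Defs.

(* Main.v *)
Require Import Defs.
From HB Require Import structures.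
From mathcomp Require Import all_boot all_order all_algebra.
From mathcomp Require Import all_classical all_reals all_analysis.
From mathcomp Require Import measurable_realfun.
From mathcomp Require Import ring lra.
Import Order.TTheory GRing.Theory Num.Theory.
Import numFieldNormedType.Exports.
Local Open Scope classical_set_scope.
Local Open Scope ring_scope.
Lemma tv_sum (R : realType) (K' : set int) (s : int -> R) (f : R -> R)
    (L : seq int) (a b : R) :
  (forall i j, K' i -> K' j -> (i <= j)%R -> s i <= s j) ->
  sorted <%R L -> (forall k, k \in L -> K' k /\ K' (k + 1)) ->
  a <= b -> (forall k, k \in L -> a <= s k /\ s (k + 1) <= b) ->
  ((\sum_(k <- L) `|f (s (k + 1)) - f (s k)|)%:E <= total_variation a b f)%E.
Proof.
move=> mono; elim: L a => [|k L IH] a /= sL KL ab Lab.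
  by rewrite big_nil; exact: total_variation_ge0.
have [ask sk1b] := Lab k (mem_head _ _).
have [Kk Kk1] := KL k (mem_head _ _).
have sk1 : s k <= s (k + 1) by apply: mono => //; rewrite lerDl.
move: sL; rewrite lt_path_sortedE => /andP[/allP allk sL].
rewrite big_cons EFinD (total_variationD f ask (le_trans sk1 sk1b)).
rewrite (total_variationD f sk1 sk1b).
apply: le_trans; last first.
  apply: leeDr; exact: total_variation_ge0.
apply: leeD; first exact: total_variation_ge.
apply: IH => //.
- by move=> j jL; apply: KL; rewrite inE jL orbT.
- move=> j jL; have jL' : j \in k :: L by rewrite inE jL orbT.
  have [Kj Kj1] := KL j jL'.
  have [_ ->] := Lab j jL'; split => //.
  apply: mono => //; have := allk j jL; rewrite /= => kj.
  by rewrite lezD1.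
Qed.
Lemma Pfin (R : realType) (d : measure_display) (T : measurableType d)
  (P : probability T R) (A : set T) : measurable A -> P A = (fine (P A))%:E.
Proof. by move=> mA; rewrite fineK// fin_num_measure. Qed.

Lemma eadd_fin (R : realType) (e : \bar R) (c r : R) :
  (e + c%:E = r%:E)%E -> e = (r - c)%:E.
Proof. by case: e => // x /= [<-]; rewrite addrK. Qed.

Lemma cheb_events (R : realType) (d : measure_display) (T : measurableType d)
    (P : probability T R) (I : eqType) (E : I -> set T) (a : I -> R)
    (F : seq I) (alpha p M : R) :
  (forall k, measurable (E k)) -> (forall k, 0 <= a k) -> uniq F ->
  0 <= alpha -> (forall k, k \in F -> a k <= alpha) ->
  (forall k, k \in F -> (p%:E <= P (E k))%E) ->
  (forall i j, i \in F -> j \in F -> i != j ->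
     P (E i `&` E j) = (P (E i) * P (E j))%E) ->
  0 < p -> 0 <= M -> 2 * M <= p * \sum_(k <- F) a k ->
  0 < \sum_(k <- F) a k ->
  (P [set w | (\sum_(k <- F) a k * \1_(E k) w <= M)%R] <=
    (4 * alpha / (p ^+ 2 * \sum_(k <- F) a k))%:E)%E.
Proof.
move=> mE a0 uF al0 aal pE indep p0 M0 pM sa0.
pose q k := fine (P (E k)).
have Pq k : P (E k) = (q k)%:E by rewrite /q -Pfin.
have q0 k : 0 <= q k by rewrite -lee_fin -Pq.
have q1 k : q k <= 1 by rewrite -lee_fin -Pq probability_le1.
have pq k : k \in F -> p <= q k by move=> kF; rewrite -lee_fin -Pq pE.
pose S w := \sum_(k <- F) a k * \1_(E k) w.
pose m := \sum_(k <- F) a k * q k.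
have mS : measurable_fun setT S.
  apply: measurable_sum => k; apply: measurable_funM.
    exact: measurable_cst.
  exact: measurable_indic.
have S0 w : 0 <= S w.
  by apply: sumr_ge0 => k _; rewrite mulr_ge0 ?indic_ge0.
have IS : (\int[P]_w (S w)%:E = m%:E)%E.
  rewrite /S /m -sumEFin.
  under eq_integral do rewrite -sumEFin.
  rewrite ge0_integral_sum//; last first.
    by move=> k w _; rewrite lee_fin mulr_ge0 ?indic_ge0.
  move=> k; apply/measurable_EFinP; apply: measurable_funM.
      exact: measurable_cst.
    exact: measurable_indic.
  apply: eq_bigr => k _.
  under eq_integral do rewrite EFinM.
  rewrite ge0_integralZl_EFin//.
  rewrite integral_indic// ?setIT.
  all: try (by rewrite EFinM; congr (_ * _)%E; exact: Pq).
  all: try (by apply/measurable_EFinP; exact: measurable_indic).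
  all: try (by apply/measurable_EFinP; exact: measurable_indic).
  all: try (by move=> w _; rewrite lee_fin indic_ge0).
pose qq i j := fine (P (E i `&` E j)).
have mEE i j : measurable (E i `&` E j) by exact: measurableI.
have S2E w : S w ^+ 2 = \sum_(i <- F) \sum_(j <- F) a i * a j * \1_(E i `&` E j) w.
  rewrite /S expr2 big_distrl /=; apply: eq_bigr => i _.
  rewrite big_distrr /=; apply: eq_bigr => j _.
  by rewrite indicI /= mulrACA.
have IS2 : (\int[P]_w (S w ^+ 2)%:E =
    (\sum_(i <- F) \sum_(j <- F) a i * a j * qq i j)%:E)%E.
  under eq_integral do rewrite S2E -sumEFin.
  rewrite -sumEFin ge0_integral_sum//; first last.
  - move=> i w _; rewrite lee_fin; apply: sumr_ge0 => j _.
    by rewrite !mulr_ge0 ?indic_ge0.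
  - move=> i; apply/measurable_EFinP; apply: measurable_sum => j.
    apply: measurable_funM; first exact: measurable_cst.
    exact: measurable_indic.
  apply: eq_bigr => i _.
  under eq_integral do rewrite -sumEFin.
  rewrite -sumEFin ge0_integral_sum//; first last.
  - by move=> j w _; rewrite lee_fin !mulr_ge0 ?indic_ge0.
  - move=> j; apply/measurable_EFinP; apply: measurable_funM.
      exact: measurable_cst.
    exact: measurable_indic.
  apply: eq_bigr => j _.
  under eq_integral do rewrite EFinM.
  rewrite ge0_integralZl_EFin//.
  all: try (by move=> w _; rewrite lee_fin indic_ge0).
  all: try (by apply/measurable_EFinP; exact: measurable_indic).
  all: try (by rewrite mulr_ge0).
  rewrite integral_indic// setIT [RHS]EFinM; congr (_ * _)%E.
  by rewrite /qq fineK// fin_num_measure.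
pose V := \sum_(i <- F) a i ^+ 2 * q i.
have QV : \sum_(i <- F) \sum_(j <- F) a i * a j * qq i j <= V + m ^+ 2.
  have -> : m ^+ 2 = \sum_(i <- F) \sum_(j <- F) a i * a j * (q i * q j).
    rewrite /m expr2 big_distrl; apply: eq_bigr => i _.
    rewrite big_distrr; apply: eq_bigr => j _ /=.
    by rewrite mulrACA.
  rewrite /V -big_split /= big_seq [X in _ <= X]big_seq.
  apply: ler_sum => i iF.
  rewrite (bigD1_seq i) //= [X in _ <= _ + X](bigD1_seq i) //=.
  rewrite /qq setIid -/(q i) expr2 addrA.
  apply: lerD; first by rewrite lerDl !mulr_ge0.
  rewrite big_seq_cond [X in _ <= X]big_seq_cond.
  apply: ler_sum => j /andP[jF ji].
  rewrite indep //; last by rewrite eq_sym.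
  by rewrite fineM// fin_num_measure.
have mge : p * \sum_(k <- F) a k <= m.
  rewrite mulr_sumr /m big_seq [X in _ <= X]big_seq; apply: ler_sum => k kF.
  by rewrite mulrC ler_wpM2l// pq.
have m0 : 0 <= m by apply: sumr_ge0 => k _; rewrite mulr_ge0.
have mSB : measurable_fun setT (fun w => (m - S w) ^+ 2).
  by apply: measurable_funX; apply: measurable_funB => //; exact: measurable_cst.
have H1 : (\int[P]_w ((m - S w) ^+ 2)%:E + (2 * m * m)%:E =
    (m ^+ 2 + \sum_(i <- F) \sum_(j <- F) a i * a j * qq i j)%:E)%E.
  transitivity (\int[P]_w (((m - S w) ^+ 2)%:E + (2 * m * S w)%:E))%E.
    rewrite ge0_integralD//.
    all: try (by move=> w _; rewrite lee_fin ?sqr_ge0 ?mulr_ge0).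
    all: try (by apply/measurable_EFinP).
    - congr (_ + _)%E.
      under eq_integral do rewrite EFinM.
      rewrite ge0_integralZl_EFin//; first by rewrite IS.
      + by move=> w _; rewrite lee_fin.
      + exact/measurable_EFinP.
      + by rewrite mulr_ge0.
    - by apply/measurable_EFinP; apply: measurable_funM.
  transitivity (\int[P]_w ((m ^+ 2)%:E + (S w ^+ 2)%:E))%E.
    apply: eq_integral => w _; rewrite -!EFinD; congr EFin; ring.
  rewrite ge0_integralD//.
  all: try (by move=> w _; rewrite lee_fin ?sqr_ge0).
  all: try (by apply/measurable_EFinP).
  - rewrite integral_cst// IS2 EFinD; congr (_ + _)%E.
    rewrite -[RHS]mule1; congr (_ * _)%E; exact: probability_setT.
  - by apply/measurable_EFinP; apply: measurable_funX.
have XE := @eadd_fin _ _ _ _ H1.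
have XV : (\int[P]_w ((m - S w) ^+ 2)%:E <= V%:E)%E.
  by rewrite XE lee_fin; lra.
pose A := [set w | S w <= M].
have mA : measurable A.
  have -> : A = S @^-1` `]-oo, M].
    by apply/seteqP; split => w; rewrite /A /= in_itv /=.
  by rewrite -(setTI (_ @^-1` _)); apply: mS => //; exact: measurable_itv.
change (P A <= (4 * alpha / (p ^+ 2 * \sum_(k <- F) a k))%:E)%E.
have IA : (\int[P]_w (((m - M) ^+ 2)%:E * (\1_A w)%:E) =
    ((m - M) ^+ 2)%:E * P A)%E.
  rewrite ge0_integralZl_EFin//.
  all: try (by move=> w _; rewrite lee_fin indic_ge0).
  all: try (by apply/measurable_EFinP; exact: measurable_indic).
  all: try (by rewrite sqr_ge0).
  by rewrite integral_indic// setIT.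
have markov : (((m - M) ^+ 2)%:E * P A <= \int[P]_w ((m - S w) ^+ 2)%:E)%E.
  rewrite -IA; apply: ge0_le_integral => //.
  all: try (by move=> w _; rewrite lee_fin mulr_ge0 ?sqr_ge0 ?indic_ge0).
  all: try (by apply/measurable_EFinP).
  - apply/measurable_EFinP; apply: measurable_funM.
      exact: measurable_cst.
    exact: measurable_indic.
  - move=> w _; rewrite -EFinM lee_fin indicE.
    have := S0 w; case: (boolP (w \in A)) => [|_] /=; last first.
      by rewrite mulr0 sqr_ge0.
    rewrite inE /A /= mulr1 => SM S0w.
    nra.
rewrite (@Pfin _ _ _ P _ mA) in markov *.
set y := fine (P A).
have y0 : 0 <= y by apply: fine_ge0; exact: measure_ge0.
have yV : (m - M) ^+ 2 * y <= V.
  by rewrite -lee_fin EFinM (le_trans markov XV).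
set sa := \sum_(k <- F) a k in pM sa0 mge *.
have Va : V <= alpha * sa.
  rewrite /V /sa mulr_sumr big_seq [X in _ <= X]big_seq; apply: ler_sum => k kF.
  have := aal k kF; have := a0 k; have := q0 k; have := q1 k; nra.
have h1 : (p * sa / 2) ^+ 2 <= (m - M) ^+ 2 by nra.
have h2 : y * (p * sa / 2) ^+ 2 <= alpha * sa.
  apply: le_trans Va; apply: le_trans yV; rewrite mulrC; exact: ler_wpM2r.
rewrite lee_fin ler_pdivlMr; last by rewrite mulr_gt0// exprn_gt0.
rewrite -(ler_pM2r sa0).
rewrite (_ : y * (p ^+ 2 * sa) * sa = 4 * (y * (p * sa / 2) ^+ 2)); last by field.
apply: (le_trans (ler_wpM2l _ h2)) => //; by rewrite mulrA.
Qed.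
Lemma normal_probT (R : realType) (s : R) : normal_prob 0 s setT = 1%E.
Proof. exact: integral_normal_pdf. Qed.

Lemma bm_inst (R : realType) (d : measure_display) (T : measurableType d)
    (P : probability T R) (B : T -> R -> R) (ts : seq R) (As : seq (set R)) n :
  standard_BM P B -> nth 0 ts 0 = 0 ->
  (forall i, (i < n)%N -> nth 0 ts i < nth 0 ts i.+1) ->
  (forall i, measurable (nth setT As i)) ->
  P (\bigcap_(i in `I_n) [set w | nth setT As i (B w (nth 0 ts i.+1) - B w (nth 0 ts i))]) =
  (\prod_(i < n) normal_prob 0%R (Num.sqrt (nth 0 ts i.+1 - nth 0 ts i)%R) (nth setT As i))%E.
Proof. by case=> _ _ _ H t0 tinc mA; apply: H. Qed.

Lemma bm_two (R : realType) (d : measure_display) (T : measurableType d)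
    (P : probability T R) (B : T -> R -> R) (a b c e : R) (A C : set R) :
  standard_BM P B -> 0 <= a -> a < b -> b <= c -> c < e ->
  measurable A -> measurable C ->
  P ([set w | A (B w b - B w a)] `&` [set w | C (B w e - B w c)]) =
  (normal_prob 0%R (Num.sqrt (b - a)%R) A * normal_prob 0%R (Num.sqrt (e - c)%R) C)%E.
Proof.
move=> HB a0 ab bc ce mA mC.
have mnth (l : seq (set R)) : (forall S, S \in l -> measurable S) ->
    forall i, measurable (nth setT l i).
  move=> hl i; have [il|il] := ltnP i (size l).
    by apply: hl; exact: mem_nth.
  by rewrite nth_default.
have [a0'|an0] := eqVneq a 0.
  subst a; have [bc'|bnc] := eqVneq b c.
    subst c.
    have := @bm_inst _ _ _ P B [:: 0; b; e] [:: A; C] 2 HB erefl.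
    rewrite !big_ord_recr big_ord0 /= mul1e => <-.
    - congr (P _); apply/seteqP; split => w /=.
        move=> [HA HC] i /= ilt; case: i ilt => [|[|]] //= _.
      by move=> H; split; [exact: H 0%N isT|exact: H 1%N isT].
    - by move=> i; case: i => [|[|]] //= _; lra.
    - by apply: mnth => S; rewrite !inE => /orP[|] /eqP ->.
  have bc' : b < c by rewrite lt_neqAle bnc.
  have := @bm_inst _ _ _ P B [:: 0; b; c; e] [:: A; setT; C] 3 HB erefl.
  rewrite !big_ord_recr big_ord0 /= mul1e normal_probT mule1 => <-.
  - congr (P _); apply/seteqP; split => w /=.
      move=> [HA HC] i /= ilt; case: i ilt => [|[|[|]]] //= _.
    by move=> H; split; [exact: H 0%N isT|exact: H 2%N isT].
  - by move=> i; case: i => [|[|[|]]] //= _; lra.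
  - by apply: mnth => S; rewrite !inE => /orP[/eqP ->|/orP[/eqP ->|/eqP ->]].
have a0' : 0 < a by rewrite lt_neqAle eq_sym an0.
have [bc'|bnc] := eqVneq b c.
  subst c.
  have := @bm_inst _ _ _ P B [:: 0; a; b; e] [:: setT; A; C] 3 HB erefl.
  rewrite !big_ord_recr big_ord0 /= mul1e normal_probT mul1e => <-.
  - congr (P _); apply/seteqP; split => w /=.
      move=> [HA HC] i /= ilt; case: i ilt => [|[|[|]]] //= _.
    by move=> H; split; [exact: H 1%N isT|exact: H 2%N isT].
  - by move=> i; case: i => [|[|[|]]] //= _; lra.
  - by apply: mnth => S; rewrite !inE => /orP[/eqP ->|/orP[/eqP ->|/eqP ->]].
have bc' : b < c by rewrite lt_neqAle bnc.
have := @bm_inst _ _ _ P B [:: 0; a; b; c; e] [:: setT; A; setT; C] 4 HB erefl.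
rewrite !big_ord_recr big_ord0 /= mul1e !normal_probT mul1e mule1 => <-.
- congr (P _); apply/seteqP; split => w /=.
    move=> [HA HC] i /= ilt; case: i ilt => [|[|[|[|]]]] //= _.
  by move=> H; split; [exact: H 1%N isT|exact: H 3%N isT].
- by move=> i; case: i => [|[|[|[|]]]] //= _; lra.
- by apply: mnth => S; rewrite !inE => /orP[/eqP ->|/orP[/eqP ->|/orP[/eqP ->|/eqP ->]]].
Qed.
Lemma peak_scale (R : realType) (sg : R) : 0 < sg ->
  normal_peak sg = normal_peak 1 / sg.
Proof.
move=> sg0; rewrite /normal_peak expr1n mul1r -mulrnAr sqrtrM ?sqr_ge0//.
by rewrite sqrtr_sqr ger0_norm ?(ltW sg0)// invfM mulrC.
Qed.

Lemma normal_lb_gen (R : realType) (sg c lo hi : R) : 0 < sg -> 0 <= c ->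
  hi - lo = sg -> (forall x, lo <= x <= hi -> x ^+ 2 <= ((c + 1) * sg) ^+ 2) ->
  ((normal_peak 1 * expR (- (c + 1) ^+ 2 / 2))%:E <=
    normal_prob 0 sg `[lo, hi])%E.
Proof.
move=> sg0 c0 hl xb.
pose K := normal_peak 1 * expR (- (c + 1) ^+ 2 / 2).
have mI : measurable (`[lo, hi] : set R) by exact: measurable_itv.
have -> : (K%:E = \int[lebesgue_measure]_(x in `[lo, hi]) (cst (K / sg)%:E) x)%E.
  rewrite integral_cst//.
  have L := lebesgue_measure_itv `[lo, hi]; rewrite /= lte_fin in L.
  have lh : lo < hi by lra.
  rewrite lh -EFinD hl in L.
  rewrite {1}(_ : K = K / sg * sg); last by rewrite divfK // gt_eqF.
  rewrite EFinM; congr (_ * _)%E.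
  exact: esym L.
apply: ge0_le_integral => //.
- by move=> x _; rewrite lee_fin /K divr_ge0 ?mulr_ge0 ?normal_peak_ge0 ?expR_ge0// ltW.
- apply/measurable_EFinP; apply: measurable_funS (measurable_normal_pdf 0 sg) => //.
- move=> x /= /[!in_itv] /= /andP[lx xh]; rewrite lee_fin normal_pdfE ?gt_eqF//=.
  rewrite peak_scale// /K mulrAC ler_wpM2l ?divr_ge0 ?normal_peak_ge0 ?(ltW sg0)//.
  rewrite /normal_fun ler_expR subr0 !mulNr lerN2.
  rewrite ler_pdivrMr ?mulrn_wgt0 ?exprn_gt0// mulrAC -mulr_natr mulrA.
  rewrite -mulrA [2%:R * _]mulrC mulrA divfK ?pnatr_eq0//.
  have := xb x; rewrite lx xh /= => /(_ isT); rewrite exprMn.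
  by move=> ->.
Qed.
Lemma min_split (R : realType) (X Y : \bar R) (c z : R) : 0 < z ->
  (Order.min X Y * (z^-1)%:E <= c%:E)%E ->
  (X <= (c * z)%:E)%E \/ (Y <= (c * z)%:E)%E.
Proof.
move=> z0 H.
have : (Order.min X Y <= (c * z)%:E)%E.
  move: H; case: (Order.min X Y) => [m||] //=.
  - by rewrite -EFinM lee_fin ler_pdivrMr.
  - by rewrite gt0_mulye ?lte_fin ?invr_gt0.
  - by move=> _; rewrite leNye.
by rewrite ge_min => /orP[]; [left|right].
Qed.

Lemma step_up (R : realType) (l0 r1 : \bar R) (W0 W1 B0 B1 x c1 sg : R) :
  0 < sg -> (l0 <= W0%:E)%E -> (W1%:E <= r1)%E ->
  (r1 - l0 <= (c1 * sg)%:E)%E -> (`|c1| + 1) * sg <= B1 - B0 ->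
  sg <= `|(W1 - x - B1) - (W0 - x - B0)|.
Proof.
move=> sg0 h0 h1 hr hB.
have : ((W1 - W0)%:E <= (c1 * sg)%:E)%E.
  by rewrite EFinB; apply: le_trans hr; exact: leeB.
rewrite lee_fin => hW.
have hc : c1 * sg <= `|c1| * sg by apply: ler_wpM2r; [exact: ltW|exact: ler_norm].
rewrite ler_normr; apply/orP; right; lra.
Qed.

Lemma step_down (R : realType) (r0 l1 : \bar R) (W0 W1 B0 B1 x c1 sg : R) :
  0 < sg -> (W0%:E <= r0)%E -> (l1 <= W1%:E)%E ->
  (- l1 + r0 <= (c1 * sg)%:E)%E -> B1 - B0 <= - ((`|c1| + 1) * sg) ->
  sg <= `|(W1 - x - B1) - (W0 - x - B0)|.
Proof.
move=> sg0 h0 h1 hr hB.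
have : ((W0 - W1)%:E <= (c1 * sg)%:E)%E.
  rewrite EFinB; apply: le_trans hr; rewrite [X in (_ <= X)%E]addeC; exact: leeB.
rewrite lee_fin => hW.
have hc : c1 * sg <= `|c1| * sg by apply: ler_wpM2r; [exact: ltW|exact: ler_norm].
rewrite ler_normr; apply/orP; left; lra.
Qed.

Lemma bm_one (R : realType) (d : measure_display) (T : measurableType d)
    (P : probability T R) (B : T -> R -> R) (a b : R) (A : set R) :
  standard_BM P B -> 0 <= a -> a < b -> measurable A ->
  P [set w | A (B w b - B w a)] = normal_prob 0 (Num.sqrt (b - a)) A.
Proof.
move=> HB a0 ab mA.
have := @bm_two _ _ _ P B a b b (b + 1) A setT HB a0 ab (lexx _) _ mA measurableT.
rewrite normal_probT mule1 => <-; last by rewrite ltrDl.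
congr (P _); apply/seteqP; split => w /=.
- by move=> h; split.
- by move=> [h _].
Qed.

Lemma meas_Sle (R : realType) (d : measure_display) (T : measurableType d)
    (I : Type) (E : I -> set T) (a : I -> R) (F : seq I) (M : R) :
  (forall k, measurable (E k)) ->
  measurable [set w | (\sum_(k <- F) a k * \1_(E k) w <= M)%R].
Proof.
move=> mE.
have mS : measurable_fun setT (fun w => \sum_(k <- F) a k * \1_(E k) w).
  apply: measurable_sum => k; apply: measurable_funM.
    exact: measurable_cst.
  exact: measurable_indic.
have -> : [set w | (\sum_(k <- F) a k * \1_(E k) w <= M)%R] =
  (fun w => \sum_(k <- F) a k * \1_(E k) w) @^-1` `]-oo, M].
  by apply/seteqP; split => w; rewrite /= in_itv /=.
by rewrite -(setTI (_ @^-1` _)); apply: mS => //; exact: measurable_itv.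
Qed.

Lemma normal_lb_pos (R : realType) (sg c : R) : 0 < sg -> 0 <= c ->
  ((normal_peak 1 * expR (- (c + 1) ^+ 2 / 2))%:E <=
    normal_prob 0%R sg `[(c * sg)%R, ((c + 1) * sg)%R])%E.
Proof.
move=> sg0 c0; apply: normal_lb_gen => //; first by ring.
have g0 : 0 <= c * sg by rewrite mulr_ge0// ltW.
move=> x /andP[]; move: g0; set g := c * sg; set h := (c + 1) * sg.
move=> g0 h1 h2; nra.
Qed.

Lemma normal_lb_neg (R : realType) (sg c : R) : 0 < sg -> 0 <= c ->
  ((normal_peak 1 * expR (- (c + 1) ^+ 2 / 2))%:E <=
    normal_prob 0%R sg `[(- ((c + 1) * sg))%R, (- (c * sg))%R])%E.
Proof.
move=> sg0 c0; apply: normal_lb_gen => //; first by ring.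
have g0 : 0 <= c * sg by rewrite mulr_ge0// ltW.
move=> x /andP[]; move: g0; set g := c * sg; set h := (c + 1) * sg.
move=> g0 h1 h2; nra.
Qed.

Lemma pos_ae0 (R : realType) (x : \bar R) : (0 <= x)%E ->
  (forall e : R, 0 < e -> (x <= e%:E)%E) -> x = 0%E.
Proof.
case: x => [y| |] x0 H.
- rewrite lee_fin in x0; have := x0; rewrite le_eqVlt => /orP[/eqP <-//|y0'].
  have := H (y / 2); rewrite lee_fin divr_gt0// => /(_ isT) ?; exfalso; lra.
- by have := H 1 ltr01.
- by [].
Qed.

Theorem theorem4p2 (R : realType) (d : measure_display) (T : measurableType d)
    (P : probability T R) (B : T -> R -> R)
    (l r : R -> \bar R) (x : R) (W : T -> R -> R)
    (tau : R) (K' : set int) (s : int -> R) (c1 : R) :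
  standard_BM P B ->
  cadlag_minus l -> cadlag_plus r ->
  (forall t, 0 <= t -> (l t <= r t)%E) ->
  (forall w, ESP l r (fun t => x + B w t) (W w) (fun t => W w t - x - B w t)) ->
  0 < tau ->
  ereal_inf [set t%:E | t in collision_times l r] = tau%:E ->
  (forall i j m, K' i -> K' j -> (i <= m)%R -> (m <= j)%R -> K' m) ->
  (forall i j, K' i -> K' j -> (i < j)%R -> s i < s j) ->
  (forall k, K' k -> 0 <= s k <= tau) ->
  (forall k, drop_max K' k ->
     (Order.min (r (s (k + 1)%R) - l (s k)) (- l (s (k + 1)%R) + r (s k))
        * ((Num.sqrt (s (k + 1)%R - s k))^-1)%:E <= c1%:E)%E) ->
  (\esum_(k in drop_max K') (Num.sqrt (s (k + 1)%R - s k))%:E = +oo)%E ->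
  {ae P, forall w, total_variation 0 tau (fun t => W w t - x - B w t) = +oo%E}.
Proof.
move=> HB lm rp lr HESP tau0 tauinf Kconv sinc sK hmin hsum.
have [mB _ _ _] := HB.
have smono : forall i j, K' i -> K' j -> (i <= j)%R -> s i <= s j.
  move=> i j Ki Kj; rewrite le_eqVlt => /orP[/eqP ->//|ij].
  exact: ltW (sinc i j Ki Kj ij).
have dK : forall k, drop_max K' k -> K' k /\ K' (k + 1).
  move=> k [Kk nmax]; split => //.
  have [j [Kj kj]] : exists j, K' j /\ (k < j)%R.
    apply: contrapT => hn; apply: nmax => j Kj.
    rewrite leNgt; apply/negP => kj; apply: hn; by exists j.
  by apply: (Kconv k j) => //; [rewrite lerDl | rewrite lezD1].
pose sg k := Num.sqrt (s (k + 1) - s k).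
have sg0 : forall k, drop_max K' k -> 0 < sg k.
  move=> k /dK [Kk Kk1]; rewrite sqrtr_gt0 subr_gt0; apply: sinc => //.
  by rewrite ltrDl.
have sgle : forall k, drop_max K' k -> sg k <= Num.sqrt tau.
  move=> k /dK [Kk Kk1]; apply: ler_wsqrtr.
  have /andP[h1 h2] := sK k Kk; have /andP[h3 h4] := sK _ Kk1; lra.
have sg_ge0 : forall k, 0 <= sg k by move=> k; exact: sqrtr_ge0.
pose c := `|c1| + 1.
have c0 : 0 <= c by rewrite addr_ge0.
pose p := normal_peak (1 : R) * expR (- (c + 1) ^+ 2 / 2).
have p0 : 0 < p by rewrite mulr_gt0 ?expR_gt0 ?normal_peak_gt0 ?oner_neq0.
pose dir (k : int) : bool := `[< (r (s (k + 1)%R) - l (s k) <= (c1 * sg k)%:E)%E >].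
pose Ak k : set R := if dir k then [set` `[c * sg k, (c + 1) * sg k]]
  else [set` `[- ((c + 1) * sg k), - (c * sg k)]].
pose E k := [set w | Ak k (B w (s (k + 1)) - B w (s k))].
have mAk k : measurable (Ak k) by rewrite /Ak; case: (dir k); exact: measurable_itv.
have mE k : measurable (E k).
  have mf : measurable_fun setT (fun w => B w (s (k + 1)) - B w (s k)).
    exact: measurable_funB.
  have -> : E k = setT `&` ((fun w => B w (s (k + 1)) - B w (s k)) @^-1` Ak k).
    by rewrite setTI.
  exact: mf.
have PE : forall k, drop_max K' k -> (p%:E <= P (E k))%E.
  move=> k dk; have [Kk Kk1] := dK k dk.
  have sk0 : 0 <= s k by have /andP[] := sK k Kk.
  have skk : s k < s (k + 1) by apply: sinc => //; rewrite ltrDl.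
  rewrite /E (@bm_one _ _ _ P B (s k) (s (k + 1)) (Ak k) HB sk0 skk (mAk k)).
  rewrite /Ak; case: (dir k).
  - exact: (@normal_lb_pos _ (sg k) c (sg0 k dk) c0).
  - exact: (@normal_lb_neg _ (sg k) c (sg0 k dk) c0).
have indep : forall i j, drop_max K' i -> drop_max K' j -> i != j ->
    P (E i `&` E j) = (P (E i) * P (E j))%E.
  have key : forall i j, drop_max K' i -> drop_max K' j -> (i < j)%R ->
      P (E i `&` E j) = (P (E i) * P (E j))%E.
    move=> i j di dj ij; have [Ki Ki1] := dK i di; have [Kj Kj1] := dK j dj.
    have si0 : 0 <= s i by have /andP[] := sK i Ki.
    have sj0 : 0 <= s j by have /andP[] := sK j Kj.
    have sii : s i < s (i + 1) by apply: sinc => //; rewrite ltrDl.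
    have sjj : s j < s (j + 1) by apply: sinc => //; rewrite ltrDl.
    have sij : s (i + 1) <= s j by apply: smono => //; rewrite lezD1.
    rewrite /E (@bm_two _ _ _ P B _ _ _ _ _ _ HB si0 sii sij sjj (mAk i) (mAk j)).
    rewrite (@bm_one _ _ _ P B _ _ _ HB si0 sii (mAk i)).
    by rewrite (@bm_one _ _ _ P B _ _ _ HB sj0 sjj (mAk j)).
  move=> i j di dj; rewrite neq_lt => /orP[ij|ji]; first exact: key.
  by rewrite setIC key // muleC.
have hF : forall n : nat, exists F : seq int,
    [/\ uniq F, (forall k, k \in F -> drop_max K' k) &
        n%:R <= \sum_(k <- F) sg k].
  move=> n.
  have : (n%:R%:E < \esum_(k in drop_max K') (Num.sqrt (s (k + 1)%R - s k))%:E)%E.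
    by rewrite hsum ltry.
  move/ereal_sup_gt => [y [A [finA sA] <-{y}]] ny.
  exists (finmap.enum_fset (fset_set A)); split.
  - exact: finmap.fset_uniq.
  - by move=> k; rewrite in_fset_set // inE; exact: sA.
  - by move: ny; rewrite fsbig_finite // sumEFin lte_fin => /ltW.
have [Fn HFn] := choice hF.
pose S n w := \sum_(k <- Fn n) sg k * \1_(E k) w.
pose BM (M : nat) := \bigcap_n [set w | S n w <= M%:R].
have mS n (M : R) : measurable [set w | S n w <= M] by exact: meas_Sle.
have mBM M : measurable (BM M) by apply: bigcapT_measurable => n; exact: mS.
have PB0 M : P (BM M) = 0%E.
  apply: pos_ae0; first exact: measure_ge0.
  move=> e e0.
  pose N := (Num.truncn (2 * M%:R / p + 4 * Num.sqrt tau / (p ^+ 2 * e))).+1.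
  have [uF FK sumF] := HFn N.
  have hN : 2 * M%:R / p + 4 * Num.sqrt tau / (p ^+ 2 * e) < N%:R.
    exact: truncnS_gt.
  have t1 : 0 <= 2 * M%:R / p by rewrite divr_ge0// ltW.
  have t2 : 0 <= 4 * Num.sqrt tau / (p ^+ 2 * e).
    by apply: divr_ge0; rewrite mulr_ge0 ?sqrtr_ge0 ?exprn_ge0 ?ltW.
  set sa := \sum_(k <- Fn N) sg k in sumF.
  have sa0 : 0 < sa by lra.
  have pM : 2 * M%:R <= p * sa.
    have : 2 * M%:R / p <= sa by lra.
    rewrite ler_pdivrMr // => h; by rewrite [p * _]mulrC.
  apply: (@le_trans _ _ (P [set w | S N w <= M%:R])).
    apply: le_measure; rewrite ?inE; [exact: mBM|exact: mS|].
    by move=> w Hw; exact: Hw N I.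
  apply: le_trans.
    apply: (@cheb_events _ _ _ P _ E sg (Fn N) (Num.sqrt tau) p M%:R mE sg_ge0 uF).
    - exact: sqrtr_ge0.
    - by move=> k kF; exact: sgle (FK k kF).
    - by move=> k kF; exact: PE (FK k kF).
    - by move=> i j iF jF; exact: indep (FK i iF) (FK j jF).
    - exact: p0.
    - by [].
    - exact: pM.
    - exact: sa0.
  rewrite lee_fin ler_pdivrMr; last by rewrite mulr_gt0// exprn_gt0.
  have : 4 * Num.sqrt tau / (p ^+ 2 * e) <= sa by lra.
  rewrite ler_pdivrMr; last by rewrite mulr_gt0// exprn_gt0.
  move=> h; apply: le_trans h _.
  by rewrite /sa le_eqVlt; apply/orP; left; apply/eqP; ring.
have negB : P.-negligible (\bigcup_M BM M).
  by apply: negligible_bigcup => M; exists (BM M); split => //; exact: PB0.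
suff : P.-negligible
    (~` [set w | total_variation 0 tau (fun t => W w t - x - B w t) = +oo%E]).
  by [].
apply: negligibleS negB => w /= hw.
have tv0 := @total_variation_ge0 _ 0 tau (fun t => W w t - x - B w t) (ltW tau0).
move: tv0 hw.
case Htv: (total_variation 0 tau (fun t => W w t - x - B w t)) => [t| |] // tv0 _.
exists (Num.truncn t).+1 => // n _ /=.
apply: le_trans (ltW (truncnS_gt t)).
have [uF FK _] := HFn n.
apply: (@le_trans _ _ (\sum_(k <- Fn n)
   `|(fun t => W w t - x - B w t) (s (k + 1)) - (fun t => W w t - x - B w t) (s k)|)).
  rewrite /S !big_seq; apply: ler_sum => k kF.
  have dk := FK k kF; have [Kk Kk1] := dK k dk.
  rewrite indicE; case: (boolP (w \in E k)) => [wE|_] /=; last first.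
    by rewrite mulr0 normr_ge0.
  rewrite mulr1; move: wE; rewrite inE /E /= => wE.
  have sk0 : 0 <= s k by have /andP[] := sK k Kk.
  have sk10 : 0 <= s (k + 1) by have /andP[] := sK _ Kk1.
  have [_ _ H3 _ _] := HESP w.
  have [_ /andP[l0 r0]] := H3 (s k) sk0.
  have [_ /andP[l1 r1]] := H3 (s (k + 1)) sk10.
  move: wE; rewrite /Ak; case Hd: (dir k) => /=; rewrite in_itv /= => /andP[hB1 hB2].
  - apply: (@step_up _ (l (s k)) (r (s (k + 1))) (W w (s k)) (W w (s (k + 1)))
      (B w (s k)) (B w (s (k + 1))) x c1 (sg k) (sg0 k dk) l0 r1 _ hB1).
    by move: Hd; rewrite /dir; case: asboolP.
  - apply: (@step_down _ (r (s k)) (l (s (k + 1))) (W w (s k)) (W w (s (k + 1)))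
      (B w (s k)) (B w (s (k + 1))) x c1 (sg k) (sg0 k dk) r0 l1 _ hB2).
    have := @min_split _ _ _ c1 (sg k) (sg0 k dk) (hmin k dk).
    case => // h; exfalso; move: Hd; rewrite /dir; case: asboolP => //.
rewrite -lee_fin -Htv.
have pe : perm_eq (sort <=%O (Fn n)) (Fn n) by rewrite perm_sort perm_refl.
rewrite -(perm_big _ pe).
apply: (@tv_sum _ K' s _ _ 0 tau smono).
- by rewrite sort_lt_sorted.
- by move=> k; rewrite mem_sort => /FK /dK.
- exact: ltW.
- move=> k; rewrite mem_sort => /FK /dK [Kk Kk1].
  by have /andP[? _] := sK k Kk; have /andP[_ ?] := sK _ Kk1.
Qed.
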